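(* Let $G'=(V',E',m')$ and $G=(V,E,m)$ be finite weighted graphs such that $G'$ is a weak cover of $G$. Then $h_G\ge h_{G'}$.
   Context: For a finite graph $G=(V,E)$ with positive edge weights $m$, set $m(v)=\sum_{e\ni v}m(e)$, $m(U)=\sum_{v\in U}m(v)$, $m(U_1,U_2)=\sum_{(u_1,u_2)\in U_1\times U_2,\ \{u_1,u_2\}\in E}m(\{u_1,u_2\})$, and $h_G=\min_{\emptyset\neq U\subsetneq V}\frac{m(U,V\setminus U)\,m(V)}{m(U)\,m(V\setminus U)}$. $G'$ is a weak cover of $G$ if there is a surjective map $p:V'\to V$ such that for every $\{v',u'\}\in E'$, $\{p(v'),p(u')\}\in E$, the induced map $p:E'\to E$ is surjective, and for every $e\in E$, $m(e)=\sum_{e'\in p^{-1}(e)}m'(e')$. *)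

(* Defs.v *)
From HB Require Import structures.
From mathcomp Require Import all_boot all_order all_algebra.
Set Implicit Arguments. Unset Strict Implicit. Unset Printing Implicit Defensive.
Import Order.TTheory GRing.Theory Num.Theory.
Local Open Scope ring_scope.

(* A finite weighted (simple) graph on the finite vertex type V:
   an edge set E of 2-element subsets of V, and edge weights m : {set V} -> R
   (only the values on E matter), positive on edges. *)
Definition wgraph (R : realFieldType) (V : finType)
    (E : {set {set V}}) (m : {set V} -> R) : Prop :=
  (forall e, e \in E -> #|e| = 2%N) /\ (forall e, e \in E -> 0 < m e).

Section Weights.
Variables (R : realFieldType) (V : finType) (E : {set {set V}}) (m : {set V} -> R).

Definition vweight (v : V) : R := \sum_(e in E | v \in e) m e.

Definition setweight (U : {set V}) : R := \sum_(v in U) vweight v.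

Definition crossweight (U1 U2 : {set V}) : R :=
  \sum_(u1 in U1) \sum_(u2 in U2 | [set u1; u2] \in E) m [set u1; u2].

Definition cheeger_ratio (U : {set V}) : R :=
  crossweight U (~: U) * setweight setT / (setweight U * setweight (~: U)).

Definition cheeger_ratios : seq R :=
  [seq cheeger_ratio U | U <- enum [pred U : {set V} | (U != set0) && (U != setT)]].

(* h_G = minimum of the ratios over nonempty proper U.  (Meaningful when
   V has at least two vertices, so that the list is nonempty.) *)
Definition cheeger : R :=
  \big[Num.min/head 0 cheeger_ratios]_(x <- cheeger_ratios) x.
End Weights.

Definition weak_cover (R : realFieldType) (V' V : finType)
    (E' : {set {set V'}}) (m' : {set V'} -> R)
    (E : {set {set V}}) (m : {set V} -> R) (p : V' -> V) : Prop :=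
  [/\ (forall v, exists v', p v' = v),
      (forall e', e' \in E' -> p @: e' \in E),
      (forall e, e \in E -> exists2 e', e' \in E' & p @: e' = e)
    & (forall e, e \in E -> m e = \sum_(e' in E' | p @: e' == e) m' e')].

(* Main.v *)
Require Import Defs.
From mathcomp Require Import all_boot all_order all_algebra.
Import Order.TTheory GRing.Theory Num.Theory.
Local Open Scope ring_scope.

Lemma count_in (T : finType) (U e : {set T}) :
  \sum_(v in U) (v \in e : nat) = #|U :&: e|.
Proof.
rewrite -sum1_card (eq_bigl (fun v => (v \in U) && (v \in e))); last first.
  by move=> v; rewrite in_setI.
rewrite big_mkcondr /=; apply: eq_bigr => v _; by case: (v \in e).
Qed.

Section W.
Variables (R : realFieldType) (V : finType) (E : {set {set V}}) (m : {set V} -> R).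

Lemma setweightE U :
  setweight E m U = \sum_(e in E) m e * #|e :&: U|%:R.
Proof.
rewrite /setweight /vweight.
under eq_bigr => v _ do rewrite big_mkcondr /=.
rewrite exchange_big /=; apply: eq_bigr => e _.
rewrite setIC -count_in natr_sum mulr_sumr; apply: eq_bigr => v _.
by case: (v \in e); rewrite ?mulr1 ?mulr0.
Qed.

Lemma single_sum s :
  (if s \in E then m s else 0) = \sum_(e in E) m e * (e == s)%:R.
Proof.
under [RHS]eq_bigr => e _ do rewrite mulr_natr mulrb.
rewrite -big_mkcondr /=.
case: (boolP (s \in E)) => hs.
  rewrite (eq_bigl (fun e => e == s)) ?big_pred1_eq // => e.
  by case: (boolP (e == s)) => [/eqP ->|]; rewrite ?hs ?andbF ?andbT.
rewrite big_pred0 // => e.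
by case: (boolP (e == s)) => [/eqP ->|]; rewrite ?andbF // (negbTE hs).
Qed.

Lemma crossweightE (U W : {set V}) :
  (forall e, e \in E -> #|e| = 2%N) -> [disjoint U & W] ->
  crossweight E m U W = \sum_(e in E) m e * (#|e :&: U| * #|e :&: W|)%:R.
Proof.
move=> E2 dUW; rewrite /crossweight.
under eq_bigr => u1 _ do rewrite big_mkcondr /=.
under eq_bigr => u1 _ do under eq_bigr => u2 _ do rewrite single_sum.
under eq_bigr => u1 _ do rewrite exchange_big /=.
rewrite exchange_big /=; apply: eq_bigr => e He.
under eq_bigr => u1 _ do rewrite -mulr_sumr.
rewrite -mulr_sumr; congr (m e * _).
rewrite natrM !(setIC e) -!count_in !natr_sum big_distrlr /=; apply: eq_bigr => u1 h1.
apply: eq_bigr => u2 h2.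
have ne : u1 != u2.
  apply/eqP => eq12; subst u2.
  by move/disjoint_setI0: dUW => /setP /(_ u1); rewrite in_setI h1 h2 in_set0.
rewrite -natrM mulnb; congr (_ %:R); congr nat_of_bool.
apply/eqP/andP => [-> | [i1 i2]]; first by rewrite !in_set2 !eqxx orbT.
apply/eqP; rewrite eq_sym eqEcard subUset !sub1set i1 i2 cards2 ne E2 //.
Qed.
End W.
Arguments crossweightE {R V E m} U W.
Arguments setweightE {R V E m} U.

Lemma transfer (R : realFieldType) (V' V : finType)
    (E' : {set {set V'}}) (m' : {set V'} -> R)
    (E : {set {set V}}) (m : {set V} -> R) (p : V' -> V) (F : {set V} -> R) :
  weak_cover E' m' E m p ->
  \sum_(e in E) m e * F e = \sum_(e' in E') m' e' * F (p @: e').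
Proof.
case=> _ hE' _ hm.
rewrite [RHS](partition_big (fun e' : {set V'} => p @: e') (fun e => e \in E)) /=; last exact: hE'.
apply: eq_bigr => e He; rewrite hm // mulr_suml; apply: eq_bigr => e' /andP[_ /eqP ->] //.
Qed.

Arguments transfer {R V' V E' m' E m p} F.

Lemma card_pre (V' V : finType) (p : V' -> V) (e' : {set V'}) (A : {set V}) :
  {in e' &, injective p} -> #|e' :&: p @^-1: A| = #|p @: e' :&: A|.
Proof.
move=> inj; rewrite -(@card_in_imset _ _ p (e' :&: p @^-1: A)); last first.
  by move=> x y /setIP[hx _] /setIP[hy _]; apply: inj.
suff -> : p @: (e' :&: p @^-1: A) = p @: e' :&: A by [].
apply/setP => y; rewrite in_setI; apply/imsetP/andP.
  case=> x /setIP[hx]; rewrite inE => hA ->; split => //; exact: imset_f.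
case=> /imsetP[x hx ->] hA; exists x => //; by rewrite in_setI hx inE hA.
Qed.

Arguments card_pre {V' V p e'} A _.

Lemma min_le (R : realFieldType) (l : seq R) idx x : x \in l ->
  \big[Num.min/idx]_(y <- l) y <= x.
Proof.
elim: l => //= a l IH; rewrite inE big_cons => /orP[/eqP->|h].
  by rewrite ge_min lexx.
by rewrite ge_min IH ?orbT.
Qed.

Lemma min_in (R : realFieldType) (l : seq R) idx :
  (\big[Num.min/idx]_(y <- l) y == idx) || (\big[Num.min/idx]_(y <- l) y \in l).
Proof.
rewrite big_seq; apply: (big_ind (fun y => (y == idx) || (y \in l))); first by rewrite eqxx.
  move=> x y hx hy; rewrite /Num.min /Order.min; by case: ifP.
by move=> y hy; rewrite hy orbT.
Qed.

Theorem proposition4p7 (R : realFieldType) (V' V : finType)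
    (E' : {set {set V'}}) (m' : {set V'} -> R)
    (E : {set {set V}}) (m : {set V} -> R) (p : V' -> V) :
  (1 < #|V|)%N ->
  wgraph E' m' -> wgraph E m ->
  weak_cover E' m' E m p ->
  cheeger E' m' <= cheeger E m.
Proof.
move=> hV [E2' _] [E2 _] hc.
have [surj hE' _ _] := hc.
have inj : forall e', e' \in E' -> {in e' &, injective p}.
  by move=> e' he'; apply/imset_injP; rewrite (E2 _ (hE' _ he')) E2'.
have hsw : forall A, setweight E m A = setweight E' m' (p @^-1: A).
  move=> A; rewrite !setweightE (transfer (fun e => #|e :&: A|%:R) hc).
  by apply: eq_bigr => e' he'; rewrite (card_pre _ (inj _ he')).
have hcw : forall A, crossweight E m A (~: A) =
                     crossweight E' m' (p @^-1: A) (~: p @^-1: A).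
  move=> A; rewrite (crossweightE A (~: A)) // ?(crossweightE (p @^-1: A)) //;
    try by rewrite -subsets_disjoint subxx.
  rewrite (transfer (fun e => (#|e :&: A| * #|e :&: ~: A|)%:R) hc).
  by apply: eq_bigr => e' he'; rewrite -preimsetC (card_pre _ (inj _ he')) (card_pre _ (inj _ he')).
have hin : cheeger E m \in cheeger_ratios E m.
  rewrite {1}/cheeger; case hl: (cheeger_ratios E m) => [|a l].
    have [x _] : exists x : V, x \in V by apply/card_gt0P; exact: ltnW hV.
    have : cheeger_ratio E m [set x] \in cheeger_ratios E m.
      apply/mapP; exists [set x] => //; rewrite mem_enum inE; apply/andP; split.
        by apply/set0Pn; exists x; rewrite in_set1.
      by apply/eqP => h; move: hV; rewrite -cardsT -h cards1.
    by rewrite hl.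
  have := @min_in R (a :: l) a; rewrite /=.
  by case/orP => [/eqP -> | //]; rewrite inE eqxx.
move/mapP: hin => [U]; rewrite mem_enum inE => /andP[U0 UT] ->.
apply: min_le; apply/mapP; exists (p @^-1: U).
  rewrite mem_enum inE; apply/andP; split.
    have [u hu] := set0Pn _ U0; have [v' hv'] := surj u.
    by apply/set0Pn; exists v'; rewrite inE hv'.
  have : ~: U != set0 by apply/negP => /eqP h; move: UT; rewrite -(setCK U) h setC0 eqxx.
  case/set0Pn => u hu; have [v' hv'] := surj u.
  apply/eqP => hT; move: hu; rewrite -hv' inE.
  by have := in_setT v'; rewrite -hT inE => ->.
rewrite /cheeger_ratio hcw hsw (hsw (~: U)) hsw preimsetT preimsetC //.
Qed.
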